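(* Let $k\ge 2$ and $C_{8k}=v_0v_1\cdots v_{8k-1}v_0$. Let $\mathscr A=\{\{v_{2i},v_{4k+2i}\}: 0\le i\le 2k-1\}$ and $\mathscr B=\{\{v_{2j+1},v_{2k+2j+1}\}: j\in[0,k-1]\cup[2k,3k-1]\}$. Let $G_{4k}(\mathscr A,\mathscr B)$ be the graph obtained from $C_{8k}$ by identifying the two vertices of each block of $\mathscr A\cup\mathscr B$ into a single vertex. Then $G_{4k}(\mathscr A,\mathscr B)\cong C_{4k}(1,2k-1)$.
   Context: Identifying a set of pairwise nonadjacent vertices means replacing them by one new vertex incident to all edges previously incident to any of them. For an integer $n\ge 3$ and integers $s_1,\dots,s_k$, the circulant graph $C_n(s_1,\dots,s_k)$ has vertex set $\mathbb Z_n$, with distinct $u,v$ adjacent iff $u-v\equiv\pm s_i\pmod n$ for some $i$. $[a,b]$ denotes the set of integers from $a$ to $b$. *)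

(* Defs.v *)
From mathcomp Require Import all_boot.
Set Implicit Arguments. Unset Strict Implicit. Unset Printing Implicit Defensive.

Definition circ_adj (n : nat) (S : seq nat) (u v : 'I_n) : bool :=
  (u != v) &&
  has (fun s => (v + s == u %[mod n]) || (u + s == v %[mod n])) S.
Arguments circ_adj : clear implicits.

(* The cycle C_n = v_0 v_1 ... v_{n-1} v_0 with v_i = i, i.e. C_n(1). *)
Definition cycle_adj (n : nat) : rel 'I_n := circ_adj n [:: 1].
Arguments cycle_adj : clear implicits.

(* Identification of the vertices of each block of a family P of pairwise
   disjoint (nonadjacent) vertex sets: the vertices of the new graph are the
   blocks of P together with singletons of the vertices not covered by P. *)
Definition ident_vertices (T : finType) (P : {set {set T}}) : {set {set T}} :=
  P :|: [set [set x] | x in ~: cover P].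

Definition ident_adj (T : finType) (adj : rel T) (X Y : {set T}) : bool :=
  (X != Y) && [exists u, exists v, [&& u \in X, v \in Y & adj u v]].

Definition ident_class (T : finType) (P : {set {set T}}) (x : T) : {set T} :=
  pblock (ident_vertices P) x.

Definition iso_onto (T U : finType) (V : {set {set T}})
    (adjV : rel {set T}) (adjU : rel U) : Prop :=
  exists f : {set T} -> U,
    [/\ {in V &, injective f},
        (forall y : U, exists2 X, X \in V & f X = y) &
        {in V &, forall X Y, adjV X Y = adjU (f X) (f Y)}].

(* The blocks of the statement, with v_m identified with m in 'I_(8k). *)
Definition blocksA (k : nat) : {set {set 'I_(8 * k)}} :=
  [set X : {set 'I_(8 * k)} | [exists i : 'I_(2 * k),
     X == [set v : 'I_(8 * k) | (val v == 2 * i) || (val v == 4 * k + 2 * i)]]].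

Definition blocksB (k : nat) : {set {set 'I_(8 * k)}} :=
  [set X : {set 'I_(8 * k)} | [exists j : 'I_(3 * k), (( j < k) || (2 * k <= j)) &&
     (X == [set v : 'I_(8 * k) | (val v == 2 * j + 1) || (val v == 2 * k + 2 * j + 1)])]].

(* Main.v *)
Require Import Defs.
From mathcomp Require Import all_boot zify.

Definition hn (k v : nat) : nat :=
  if v < 2*k then v else if odd v then (if v < 6*k then v - 2*k else v - 4*k)
  else (if v < 4*k then v else v - 4*k).

Ltac dif := repeat (case: ifP => ?).

Lemma modeqE (x y s n : nat) : x < n -> y < n -> s <= n ->
  ((y + s) == x %[mod n]) = (y + s == x) || (y + s == x + n).
Proof.
move=> xn yn sn; rewrite (modn_small xn).
case: (ltnP (y + s) n) => h.
  rewrite modn_small //; lia.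
have -> : y + s = (y + s - n) + n by lia.
rewrite modnDr modn_small; lia.
Qed.

Definition cyc n (u v : nat) := (u != v) && [|| (v+1 == u) , (u+1==v), (v+1 == u + n) | (u+1== v + n)].

Lemma cycle_adjE k (u v : 'I_(8*k)) : cycle_adj (8*k) u v = cyc (8*k) u v.
Proof.
have := ltn_ord u; have := ltn_ord v.
rewrite /cycle_adj /circ_adj /cyc /= orbF => hv hu.
rewrite !modeqE //; try lia.
rewrite -val_eqE /=; lia.
Qed.

Definition circ k (a b : nat) := (a != b) && [|| b+1 == a, a+1 == b, b+1 == a+4*k, a+1 == b+4*k, b+2*k == a+1, b+2*k == a+4*k+1, a+2*k == b+1 | a+2*k == b+4*k+1].

Lemma circ_adjE k (a b : 'I_(4*k)) : 1 <= k -> circ_adj (4*k) [:: 1; 2*k-1] a b = circ k a b.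
Proof.
move=> hk.
have := ltn_ord a; have := ltn_ord b.
rewrite /circ /circ_adj /= orbF => hb ha.
rewrite !modeqE //; try lia.
rewrite -val_eqE /=; lia.
Qed.

Lemma hn_spec k v : v < 8*k -> exists q b, b < 2 /\ v = 2*q+b /\
  ((v < 2*k /\ hn k v = v) \/
   (b = 1 /\ 2*k <= v /\ v < 6*k /\ hn k v + 2*k = v) \/
   (b = 0 /\ 2*k <= v /\ v < 4*k /\ hn k v = v) \/
   (b = 0 /\ 4*k <= v /\ v < 6*k /\ hn k v + 4*k = v) \/
   (6*k <= v /\ hn k v + 4*k = v)).
Proof.
move=> hv; exists (v %/ 2), (v %% 2); split; first lia; split; first lia.
rewrite /hn; dif; lia.
Qed.

Ltac dest := repeat match goal with
 | H : exists _, _ |- _ => let x := fresh "x" in destruct H as [x H]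
 | H : _ /\ _ |- _ => let H2 := fresh "H" in destruct H as [H2 H]
 | H : _ \/ _ |- _ => destruct H as [H|H]
 end.

Lemma cycP n u v : cyc n u v -> u <> v /\ (v+1 = u \/ u+1 = v \/ v+1 = u+n \/ u+1 = v+n).
Proof. rewrite /cyc; lia. Qed.

Lemma L1 k u v : 2 <= k -> u < 8*k -> v < 8*k -> hn k u = hn k v -> ~~ cyc (8*k) u v.
Proof.
move=> hk hu hv e; apply/negP => /cycP c.
have := (@hn_spec k u hu); have := (@hn_spec k v hv) => s1 s2; dest; lia.
Qed.

Lemma F k u u' : 2 <= k -> u < 8*k -> u' < 8*k -> hn k u = hn k u' ->
  u = u' \/ (u %% 2 = 0 /\ u < 4*k /\ u' = u + 4*k) \/ (u' %% 2 = 0 /\ u' < 4*k /\ u = u' + 4*k)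
  \/ (u %% 2 = 1 /\ (u < 2*k \/ (4*k <= u /\ u < 6*k)) /\ u' = u + 2*k)
  \/ (u' %% 2 = 1 /\ (u' < 2*k \/ (4*k <= u' /\ u' < 6*k)) /\ u = u' + 2*k).
Proof.
move=> hk hu hv e.
have := (@hn_spec k u hu); have := (@hn_spec k u' hv) => s1 s2; dest; lia.
Qed.

Lemma L2 k u v u' v' : 2 <= k -> u < 8*k -> v < 8*k -> u' < 8*k -> v' < 8*k ->
  cyc (8*k) u v -> cyc (8*k) u' v' -> hn k u = hn k u' -> hn k v = hn k v' -> u = u' /\ v = v'.
Proof.
move=> hk hu hv hu' hv' /cycP c1 /cycP c2 e1 e2.
have f1 := @F k u u' hk hu hu' e1; have f2 := @F k v v' hk hv hv' e2; dest; lia.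
Qed.

Lemma L3 k u v : 2 <= k -> u < 8*k -> v < 8*k -> cyc (8*k) u v -> circ k (hn k u) (hn k v).
Proof.
move=> hk hu hv /cycP c.
have := (@hn_spec k u hu); have := (@hn_spec k v hv) => s1 s2; dest; rewrite /circ; lia.
Qed.

Lemma hn_lt k v : v < 8*k -> hn k v < 4*k.
Proof. move=> hv; rewrite /hn; dif; lia. Qed.

Definition p1 k a := if odd a && (2*k <= a) then a + 2*k else a.
Definition p2 k a := if odd a && (a < 2*k) then a + 2*k else a + 4*k.

Lemma pspec k a : 2 <= k -> a < 4*k ->
  (hn k (p1 k a) = a /\ hn k (p2 k a) = a /\ p1 k a < 8*k /\ p2 k a < 8*k) /\
  exists q b, b < 2 /\ a = 2*q+b /\
  ((b = 0 /\ p1 k a = a /\ p2 k a = a + 4*k) \/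
   (b = 1 /\ a < 2*k /\ p1 k a = a /\ p2 k a = a + 2*k) \/
   (b = 1 /\ 2*k <= a /\ p1 k a = a + 2*k /\ p2 k a = a + 4*k)).
Proof.
move=> hk ha; split.
  rewrite /p1 /p2; dif; rewrite /hn; dif; lia.
exists (a %/ 2), (a %% 2); split; first lia; split; first lia.
rewrite /p1 /p2; dif; lia.
Qed.

Lemma circP k a b : circ k a b -> a <> b /\ (b+1 = a \/ a+1 = b \/ b+1 = a+4*k \/ a+1 = b+4*k \/ b+2*k = a+1 \/ b+2*k = a+4*k+1 \/ a+2*k = b+1 \/ a+2*k = b+4*k+1).
Proof. rewrite /circ; lia. Qed.

Lemma L4 k a b : 2 <= k -> a < 4*k -> b < 4*k -> circ k a b ->
  [|| cyc (8*k) (p1 k a) (p1 k b), cyc (8*k) (p1 k a) (p2 k b),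
      cyc (8*k) (p2 k a) (p1 k b) | cyc (8*k) (p2 k a) (p2 k b)].
Proof.
move=> hk ha hb /circP c.
have [_ s1] := pspec k a hk ha; have [_ s2] := pspec k b hk hb.
dest; first [ apply/or4P; apply: Or41; rewrite /cyc; lia | apply/or4P; apply: Or42; rewrite /cyc; lia | apply/or4P; apply: Or43; rewrite /cyc; lia | apply/or4P; apply: Or44; rewrite /cyc; lia].
Qed.

Lemma BA k i v : 2 <= k -> i < 2*k -> v < 8*k ->
  (v == 2*i) || (v == 4*k+2*i) = (hn k v == hn k (2*i)).
Proof.
move=> hk hi hv; have h2 : 2*i < 8*k by lia.
have := (@hn_spec k v hv); have := (@hn_spec k (2*i) h2) => s1 s2; dest; lia.
Qed.

Lemma BB k j v : 2 <= k -> j < 3*k -> (j < k) || (2*k <= j) -> v < 8*k ->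
  (v == 2*j+1) || (v == 2*k+2*j+1) = (hn k v == hn k (2*j+1)).
Proof.
move=> hk hj hj2 hv; have h2 : 2*j+1 < 8*k by lia.
have := (@hn_spec k v hv); have := (@hn_spec k (2*j+1) h2) => s1 s2; dest; lia.
Qed.

Lemma W k x : 2 <= k -> x < 8*k ->
  (exists2 i, i < 2*k & hn k x = hn k (2*i)) \/
  (exists2 j, (j < 3*k) && ((j < k) || (2*k <= j)) & hn k x = hn k (2*j+1)).
Proof.
move=> hk hx; have := (@hn_spec k x hx) => s; dest;
  (have : x1 = 0 \/ x1 = 1 by lia); case=> ?; subst x1;
  case: (ltnP x0 (2*k)) => ?;
  first [ left; exists x0; [lia | rewrite /hn; dif; lia]
        | left; exists (x0 - 2*k); [lia | rewrite /hn; dif; lia]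
        | right; exists x0; [lia | rewrite /hn; dif; lia]
        | right; exists (x0 - k); [lia | rewrite /hn; dif; lia] ].
Qed.

Section Main.
Variable k : nat.
Hypothesis hk : 2 <= k.

Definition fib (x : 'I_(8*k)) : {set 'I_(8*k)} := [set y : 'I_(8*k) | hn k y == hn k x].

Lemma fib_self x : x \in fib x.
Proof. by rewrite inE. Qed.

Lemma fib_eq x y : (fib x = fib y) <-> hn k x = hn k y.
Proof.
split=> [e|e]; last by apply/setP => z; rewrite !inE e.
by have := fib_self x; rewrite e inE => /eqP.
Qed.

Lemma memP X : X \in blocksA k :|: blocksB k <-> exists x, X = fib x.
Proof.
split.
  rewrite inE => /orP [|].
    rewrite inE => /existsP [i /eqP ->].
    have hi : 2 * i < 8 * k by have := ltn_ord i; lia.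
    exists (Ordinal hi); apply/setP => v; rewrite !inE /=.
    apply: BA => //; try exact: ltn_ord; have := ltn_ord i; lia.
  rewrite inE => /existsP [j /andP [hj /eqP ->]].
  have hj2 : 2 * j + 1 < 8 * k by have := ltn_ord j; lia.
  exists (Ordinal hj2); apply/setP => v; rewrite !inE /=.
  apply: BB => //; try exact: ltn_ord; have := ltn_ord j; lia.
case=> x ->.
case: (W k x hk (ltn_ord x)) => [[i hi e]|[j hj e]].
  rewrite inE; apply/orP; left; rewrite inE; apply/existsP; exists (Ordinal hi).
  apply/eqP/setP => v; rewrite !inE /= e; apply/esym/BA => //; exact: ltn_ord.
rewrite inE; apply/orP; right; rewrite inE; apply/existsP.
have hj' : j < 3 * k by case/andP: hj.
exists (Ordinal hj'); apply/andP; split; first by case/andP: hj.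
apply/eqP/setP => v; rewrite !inE /= e; apply/esym/BB => //; try exact: ltn_ord; by case/andP: hj.
Qed.

Lemma triv : trivIset (blocksA k :|: blocksB k).
Proof.
apply/trivIsetP => A B /memP [x ->] /memP [y ->] neq.
rewrite -setI_eq0; apply/eqP/setP => z; rewrite !inE.
apply/negbTE/negP => /andP [/eqP a /eqP b].
by move/eqP: neq; apply; apply/fib_eq; rewrite -a -b.
Qed.

Lemma IV : ident_vertices (blocksA k :|: blocksB k) = blocksA k :|: blocksB k.
Proof.
rewrite /ident_vertices.
have -> : cover (blocksA k :|: blocksB k) = setT.
  apply/setP => x; rewrite inE; apply/bigcupP; exists (fib x); last exact: fib_self.
  by apply/memP; exists x.
by rewrite setCT imset0 setU0.
Qed.

Lemma IC x : ident_class (blocksA k :|: blocksB k) x = fib x.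
Proof.
rewrite /ident_class IV; apply: def_pblock; [exact: triv | | exact: fib_self].
by apply/memP; exists x.
Qed.

End Main.
Arguments fib {k}. Arguments fib_self {k}. Arguments fib_eq {k}.
Arguments memP {k}. Arguments triv {k}. Arguments IV {k}. Arguments IC {k}.

Theorem mainTheorem11 (k : nat) (hk : 2 <= k) :
  let P := blocksA k :|: blocksB k in
  [/\ trivIset P,
      (forall X, X \in P -> forall u v, u \in X -> v \in X -> ~~ cycle_adj (8 * k) u v),
      (forall u v u' v' : 'I_(8 * k), cycle_adj (8 * k) u v -> cycle_adj (8 * k) u' v' ->
         ident_class P u = ident_class P u' ->
         ident_class P v = ident_class P v' -> u = u' /\ v = v') &
      iso_onto (ident_vertices P) (ident_adj (cycle_adj (8 * k)))
        (circ_adj (4 * k) [:: 1; 2 * k - 1])].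
Proof.
move=> P; split.
- exact: triv hk.
- move=> X /(memP hk) [x ->] u v; rewrite !inE => /eqP e1 /eqP e2.
  rewrite cycle_adjE; apply: L1 => //; try exact: ltn_ord; by rewrite e1 e2.
- move=> u v u' v'; rewrite !cycle_adjE !(IC hk) // => a1 a2 /fib_eq e1 /fib_eq e2.
  have [] := L2 k u v u' v' hk (ltn_ord u) (ltn_ord v) (ltn_ord u') (ltn_ord v') a1 a2 e1 e2.
  by move=> x y; split; apply: val_inj.
have h8 : forall v : 'I_(8*k), hn k v < 4*k by move=> v; apply: hn_lt; exact: ltn_ord.
pose h (v : 'I_(8*k)) : 'I_(4*k) := Ordinal (h8 v).
have h0 : 0 < 4 * k by lia.
pose f (X : {set 'I_(8*k)}) : 'I_(4*k) :=
  if [pick x in X] is Some x then h x else Ordinal h0.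
have fE : forall x, f (fib x) = h x.
  move=> x; rewrite /f; case: pickP => [y|].
    by rewrite inE => /eqP e; apply: val_inj => /=; rewrite e.
  by move=> /(_ x); rewrite fib_self.
exists f; split; rewrite (IV hk).
- move=> X Y /(memP hk) [x ->] /(memP hk) [y ->]; rewrite !fE => e.
  by apply/fib_eq; have := congr1 val e.
- move=> y.
  have [[_ [_ [hp _]]] _] := pspec k y hk (ltn_ord y).
  exists (fib (Ordinal hp)); first by apply/(memP hk); eexists.
  rewrite fE; apply: val_inj => /=.
  by have [[-> _] _] := pspec k y hk (ltn_ord y).
move=> X Y /(memP hk) [x ->] /(memP hk) [y ->]; rewrite !fE circ_adjE /=; last lia.
apply/idP/idP.
  case/andP=> neq /existsP [u /existsP [v /and3P [hu hv a]]].
  move: hu hv; rewrite !inE => /eqP <- /eqP <-.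
  rewrite cycle_adjE in a; apply: L3 => //; exact: ltn_ord.
move=> c; apply/andP; split.
  apply/negP => /eqP /fib_eq e; move: c; rewrite /circ e; lia.
have ex : forall u v, u < 8*k -> v < 8*k -> hn k u = hn k x -> hn k v = hn k y ->
   cyc (8*k) u v ->
   [exists u0, exists v0, [&& u0 \in fib x, v0 \in fib y & cycle_adj (8 * k) u0 v0]].
  move=> u v hu hv eu ev a; apply/existsP; exists (Ordinal hu); apply/existsP; exists (Ordinal hv).
  by rewrite !inE /= eu ev !eqxx cycle_adjE.
have [[ea1 [ea2 [ha1 ha2]]] _] := pspec k _ hk (ltn_ord (h x)).
have [[eb1 [eb2 [hb1 hb2]]] _] := pspec k _ hk (ltn_ord (h y)).
case/or4P: (L4 k _ _ hk (ltn_ord (h x)) (ltn_ord (h y)) c) => a; exact: ex a.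
Qed.
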